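(* Let $p,l$ be distinct odd primes and let $\Gamma=\psi(\tilde\Gamma)$ be the group described in the context. Then $\Gamma$ is commutative transitive: for all $a,b,c\in\Gamma\setminus\{1\}$, if $a$ commutes with $b$ and $b$ commutes with $c$, then $a$ commutes with $c$.
   Context: Let $p,l$ be distinct odd primes. Let $\mathbb H(\mathbb Z)$ be the ring of quaternions $x=x_0+x_1i+x_2j+x_3k$ with $x_0,\dots,x_3\in\mathbb Z$, where $i^2=j^2=k^2=-1$, $ij=-ji=k$; write $|x|^2=x_0^2+x_1^2+x_2^2+x_3^2$. Fix $c_p,d_p\in\mathbb Q_p$ with $c_p^2+d_p^2+1=0$ and $c_l,d_l\in\mathbb Q_l$ with $c_l^2+d_l^2+1=0$. Define $\psi:\mathbb H(\mathbb Z)\setminus\{0\}\to G:=PGL_2(\mathbb Q_p)\times PGL_2(\mathbb Q_l)$ by sending $x$ to the class of the pair $\left(\begin{pmatrix} x_0+x_1c_p+x_3d_p & -x_1d_p+x_2+x_3c_p\\ -x_1d_p-x_2+x_3c_p & x_0-x_1c_p-x_3d_p\end{pmatrix},\begin{pmatrix} x_0+x_1c_l+x_3d_l & -x_1d_l+x_2+x_3c_l\\ -x_1d_l-x_2+x_3c_l & x_0-x_1c_l-x_3d_l\end{pmatrix}\right)$. Let $\tilde\Gamma$ be the set of $x\in\mathbb H(\mathbb Z)$ such that $|x|^2=p^rl^s$ for some integers $r,s\ge 0$, and such that $x_0$ is odd and $x_1,x_2,x_3$ are even if $|x|^2\equiv 1\pmod 4$, while $x_1$ is even and $x_0,x_2,x_3$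 are odd if $|x|^2\equiv 3\pmod 4$. Then $\Gamma=\psi(\tilde\Gamma)$ is a torsion-free cocompact lattice in $G$. *)

(* Defs.v *)
From HB Require Import structures.
From mathcomp Require Import all_boot all_order all_algebra.
Set Implicit Arguments. Unset Strict Implicit. Unset Printing Implicit Defensive.
Import Order.TTheory GRing.Theory Num.Theory.
Local Open Scope ring_scope.

(* Integer quaternions x = x0 + x1 i + x2 j + x3 k, as 4-tuples of integers. *)
Definition quat := (int * int * int * int)%type.
Definition q0 (x : quat) : int := x.1.1.1.
Definition q1 (x : quat) : int := x.1.1.2.
Definition q2 (x : quat) : int := x.1.2.
Definition q3 (x : quat) : int := x.2.

Definition qnorm2 (x : quat) : int :=
  q0 x ^+ 2 + q1 x ^+ 2 + q2 x ^+ 2 + q3 x ^+ 2.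

Definition zodd (z : int) : bool := ~~ (2 %| z)%Z.

Definition in_Gamma_tilde (p l : nat) (x : quat) : Prop :=
  (exists r s : nat, qnorm2 x = ((p ^ r * l ^ s)%N)%:Z) /\
  ((qnorm2 x %% 4)%Z = 1 ->
     [/\ zodd (q0 x), ~~ zodd (q1 x), ~~ zodd (q2 x) & ~~ zodd (q3 x)]) /\
  ((qnorm2 x %% 4)%Z = 3 ->
     [/\ ~~ zodd (q1 x), zodd (q0 x), zodd (q2 x) & zodd (q3 x)]).

Definition mx2 (K : nzRingType) (a b c d : K) : 'M[K]_2 :=
  \matrix_(i < 2, j < 2)
     (if i == 0 :> nat then (if j == 0 :> nat then a else b)
      else (if j == 0 :> nat then c else d)).

(* One component of psi, with parameters c, d satisfying c^2 + d^2 + 1 = 0 *)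
Definition psi_mx (K : fieldType) (c d : K) (x : quat) : 'M[K]_2 :=
  let x0 := (q0 x)%:~R in let x1 := (q1 x)%:~R in
  let x2 := (q2 x)%:~R in let x3 := (q3 x)%:~R in
  mx2 (x0 + x1 * c + x3 * d) (- (x1 * d) + x2 + x3 * c)
      (- (x1 * d) - x2 + x3 * c) (x0 - x1 * c - x3 * d).

(* Equality of classes in PGL_2(K): A = lambda B for a nonzero scalar lambda *)
Definition pgl_eq (K : fieldType) (A B : 'M[K]_2) : Prop :=
  exists2 lam : K, lam != 0 & A = lam *: B.

(* psi(x) = 1 in G = PGL_2(K1) x PGL_2(K2) *)
Definition psi_is_one (K1 K2 : fieldType) (c1 d1 : K1) (c2 d2 : K2) (x : quat) : Prop :=
  pgl_eq (psi_mx c1 d1 x) 1%:M /\ pgl_eq (psi_mx c2 d2 x) 1%:M.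

Definition psi_commute (K1 K2 : fieldType) (c1 d1 : K1) (c2 d2 : K2) (x y : quat) : Prop :=
  pgl_eq (psi_mx c1 d1 x *m psi_mx c1 d1 y) (psi_mx c1 d1 y *m psi_mx c1 d1 x) /\
  pgl_eq (psi_mx c2 d2 x *m psi_mx c2 d2 y) (psi_mx c2 d2 y *m psi_mx c2 d2 x).

(* Main.v *)
Require Import Defs.
From HB Require Import structures.
From mathcomp Require Import all_boot all_order all_algebra.
From mathcomp Require Import ring lra zify.
Import Order.TTheory GRing.Theory Num.Theory.
Local Open Scope ring_scope.
Set Implicit Arguments. Unset Strict Implicit.

Lemma intr0_char0 (K : fieldType) (z : int) :
  [pchar K] =i pred0 -> z%:~R = 0 :> K -> z = 0.
Proof.
move=> /pcharf0P h; case: z => n /=.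
  move=> /eqP; rewrite -pmulrn h => /eqP ->. done.
rewrite NegzE intrN => /eqP; rewrite oppr_eq0 -pmulrn h.
done.
Qed.

Lemma two_neq0 (K : fieldType) : [pchar K] =i pred0 -> (2 : K) != 0.
Proof. by move=> /pcharf0P h; rewrite (h 2). Qed.

Lemma mx2E (K : nzRingType) (a b c d : K) (i j : 'I_2) :
  mx2 a b c d i j = (if i == 0 :> nat then (if j == 0 :> nat then a else b)
      else (if j == 0 :> nat then c else d)).
Proof. by rewrite mxE. Qed.

Lemma mx2_mul (K : nzRingType) (a b c d a' b' c' d' : K) :
  mx2 a b c d *m mx2 a' b' c' d' =
  mx2 (a * a' + b * c') (a * b' + b * d') (c * a' + d * c') (c * b' + d * d').
Proof.
apply/matrixP => i j; rewrite !mxE !big_ord_recl big_ord0 !mxE /=.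
by case: (i == 0 :> nat); case: (j == 0 :> nat); rewrite addr0.
Qed.

Lemma mx2_scale (K : nzRingType) (k a b c d : K) :
  k *: mx2 a b c d = mx2 (k * a) (k * b) (k * c) (k * d).
Proof.
apply/matrixP => i j; rewrite !mxE.
by case: i => [[|[|//]] ?]; case: j => [[|[|//]] ?].
Qed.

Lemma mx2_1 (K : nzRingType) : 1%:M = mx2 (1 : K) 0 0 1.
Proof.
apply/matrixP => i j; rewrite !mxE.
by case: i => [[|[|//]] ?]; case: j => [[|[|//]] ?].
Qed.

Lemma mx2_inj (K : nzRingType) (a b c d a' b' c' d' : K) :
  mx2 a b c d = mx2 a' b' c' d' -> [/\ a = a', b = b', c = c' & d = d'].
Proof.
move=> e.
have h : forall i j : 'I_2, mx2 a b c d i j = mx2 a' b' c' d' i j by rewrite e.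
move: (h 0 0) (h 0 1) (h 1 0) (h 1 1); rewrite !mxE /=.
by move=> -> -> -> ->.
Qed.

Definition pK {K : fieldType} (c d x0 x1 x2 x3 : K) : 'M[K]_2 :=
  mx2 (x0 + x1 * c + x3 * d) (- (x1 * d) + x2 + x3 * c)
      (- (x1 * d) - x2 + x3 * c) (x0 - x1 * c - x3 * d).

Lemma pK_mul (K : fieldType) (c d x0 x1 x2 x3 y0 y1 y2 y3 : K) :
  c ^+ 2 + d ^+ 2 + 1 = 0 ->
  pK c d x0 x1 x2 x3 *m pK c d y0 y1 y2 y3 =
  pK c d (x0*y0 - x1*y1 - x2*y2 - x3*y3)
         (x0*y1 + x1*y0 + x2*y3 - x3*y2)
         (x0*y2 - x1*y3 + x2*y0 + x3*y1)
         (x0*y3 + x1*y2 - x2*y1 + x3*y0).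
Proof.
move=> hS; rewrite /pK mx2_mul; congr mx2.
- transitivity (x0 * y0 - x1 * y1 - x2 * y2 - x3 * y3 +
    (x0 * y1 + x1 * y0 + x2 * y3 - x3 * y2) * c +
    (x0 * y3 + x1 * y2 - x2 * y1 + x3 * y0) * d + (c ^+ 2 + d ^+ 2 + 1) * (x1*y1+x3*y3)).
    ring.
  by rewrite hS mul0r addr0.
- transitivity (- ((x0 * y1 + x1 * y0 + x2 * y3 - x3 * y2) * d) +
   (x0 * y2 - x1 * y3 + x2 * y0 + x3 * y1) +
   (x0 * y3 + x1 * y2 - x2 * y1 + x3 * y0) * c + (c ^+ 2 + d ^+ 2 + 1) * (x1*y3-x3*y1)).
    ring.
  by rewrite hS mul0r addr0.
- transitivity (- ((x0 * y1 + x1 * y0 + x2 * y3 - x3 * y2) * d) -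
   (x0 * y2 - x1 * y3 + x2 * y0 + x3 * y1) +
   (x0 * y3 + x1 * y2 - x2 * y1 + x3 * y0) * c - (c ^+ 2 + d ^+ 2 + 1) * (x1*y3-x3*y1)).
    ring.
  by rewrite hS mul0r subr0.
- transitivity (x0 * y0 - x1 * y1 - x2 * y2 - x3 * y3 -
    (x0 * y1 + x1 * y0 + x2 * y3 - x3 * y2) * c -
    (x0 * y3 + x1 * y2 - x2 * y1 + x3 * y0) * d + (c ^+ 2 + d ^+ 2 + 1) * (x1*y1+x3*y3)).
    ring.
  by rewrite hS mul0r addr0.
Qed.

Lemma pK_inj (K : fieldType) (c d k x0 x1 x2 x3 y0 y1 y2 y3 : K) :
  c ^+ 2 + d ^+ 2 + 1 = 0 -> (2 : K) != 0 ->
  pK c d x0 x1 x2 x3 = k *: pK c d y0 y1 y2 y3 ->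
  [/\ x0 = k * y0, x1 = k * y1, x2 = k * y2 & x3 = k * y3].
Proof.
move=> hS h2; rewrite mx2_scale /pK => /mx2_inj [e1 e2 e3 e4].
have t : forall z : K, 2 * z = 0 -> z = 0.
  by move=> z /eqP; rewrite mulf_eq0 (negbTE h2) => /eqP.
have u : x1 * c + x3 * d - k * (y1 * c + y3 * d) = 0.
  apply: t; transitivity ((x0 + x1 * c + x3 * d) - (x0 - x1 * c - x3 * d)
     - (k * (y0 + y1 * c + y3 * d) - k * (y0 - y1 * c - y3 * d))); first ring.
  by rewrite e1 e4 subrr.
have v : - (x1 * d) + x3 * c - k * (- (y1 * d) + y3 * c) = 0.
  apply: t; transitivity ((- (x1 * d) + x2 + x3 * c) + (- (x1 * d) - x2 + x3 * c)
     - (k * (- (y1 * d) + y2 + y3 * c) + k * (- (y1 * d) - y2 + y3 * c))); first ring.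
  by rewrite e2 e3 subrr.
split.
- apply/eqP; rewrite -subr_eq0; apply/eqP; apply: t.
  transitivity ((x0 + x1 * c + x3 * d) + (x0 - x1 * c - x3 * d)
     - (k * (y0 + y1 * c + y3 * d) + k * (y0 - y1 * c - y3 * d))); first ring.
  by rewrite e1 e4 subrr.
- apply/eqP; rewrite -subr_eq0; apply/eqP.
  transitivity ((x1 - k * y1) * (c ^+ 2 + d ^+ 2 + 1) -
     (c * (x1 * c + x3 * d - k * (y1 * c + y3 * d)) - d * (- (x1 * d) + x3 * c - k * (- (y1 * d) + y3 * c)))); first ring.
  by rewrite hS u v; ring.
- apply/eqP; rewrite -subr_eq0; apply/eqP; apply: t.
  transitivity ((- (x1 * d) + x2 + x3 * c) - (- (x1 * d) - x2 + x3 * c)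
     - (k * (- (y1 * d) + y2 + y3 * c) - k * (- (y1 * d) - y2 + y3 * c))); first ring.
  by rewrite e2 e3 subrr.
- apply/eqP; rewrite -subr_eq0; apply/eqP.
  transitivity ((x3 - k * y3) * (c ^+ 2 + d ^+ 2 + 1) -
     (d * (x1 * c + x3 * d - k * (y1 * c + y3 * d)) + c * (- (x1 * d) + x3 * c - k * (- (y1 * d) + y3 * c)))); first ring.
  by rewrite hS u v; ring.
Qed.

Lemma keyK (K : fieldType) (k x0 x1 x2 x3 y0 y1 y2 y3 : K) :
  (2 : K) != 0 -> y0 != 0 ->
  (x0^+2 + x1^+2 + x2^+2 + x3^+2) * (y0^+2 + y1^+2 + y2^+2 + y3^+2) != 0 ->
  x0*y0 - x1*y1 - x2*y2 - x3*y3 = k * (y0*x0 - y1*x1 - y2*x2 - y3*x3) ->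
  x0*y1 + x1*y0 + x2*y3 - x3*y2 = k * (y0*x1 + y1*x0 + y2*x3 - y3*x2) ->
  x0*y2 - x1*y3 + x2*y0 + x3*y1 = k * (y0*x2 - y1*x3 + y2*x0 + y3*x1) ->
  x0*y3 + x1*y2 - x2*y1 + x3*y0 = k * (y0*x3 + y1*x2 - y2*x1 + y3*x0) ->
  [/\ x1*y2 = x2*y1, x1*y3 = x3*y1 & x2*y3 = x3*y2].
Proof.
move=> h2 hy0 hN e0 e1 e2 e3.
have t : forall z : K, 2 * z = 0 -> z = 0.
  by move=> z /eqP; rewrite mulf_eq0 (negbTE h2) => /eqP.
set N := _ * _ in hN.
have hk : (k - 1) * (k + 1) * N = 0.
  transitivity (((k * (y0*x0 - y1*x1 - y2*x2 - y3*x3))^+2 + (k * (y0*x1 + y1*x0 + y2*x3 - y3*x2))^+2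
    + (k * (y0*x2 - y1*x3 + y2*x0 + y3*x1))^+2 + (k * (y0*x3 + y1*x2 - y2*x1 + y3*x0))^+2) -
    ((x0*y0 - x1*y1 - x2*y2 - x3*y3)^+2 + (x0*y1 + x1*y0 + x2*y3 - x3*y2)^+2
    + (x0*y2 - x1*y3 + x2*y0 + x3*y1)^+2 + (x0*y3 + x1*y2 - x2*y1 + x3*y0)^+2)).
    rewrite /N; ring.
  by rewrite -e0 -e1 -e2 -e3 subrr.
move/eqP: hk; rewrite mulf_eq0 (negbTE hN) orbF mulf_eq0 => /orP [] /eqP hk.
  have k1 : k = 1 by apply/eqP; rewrite -subr_eq0 hk.
  rewrite k1 !mul1r in e0 e1 e2 e3.
  split; apply/eqP; rewrite -subr_eq0; apply/eqP; apply: t.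
  - transitivity (((x0*y3 + x1*y2 - x2*y1 + x3*y0) - (y0*x3 + y1*x2 - y2*x1 + y3*x0))); first ring.
    by rewrite e3 subrr.
  - transitivity (- ((x0*y2 - x1*y3 + x2*y0 + x3*y1) - (y0*x2 - y1*x3 + y2*x0 + y3*x1))); first ring.
    by rewrite e2 subrr oppr0.
  - transitivity (((x0*y1 + x1*y0 + x2*y3 - x3*y2) - (y0*x1 + y1*x0 + y2*x3 - y3*x2))); first ring.
    by rewrite e1 subrr.
have k1 : k = -1 by apply/eqP; rewrite -subr_eq0 opprK hk.
rewrite k1 in e0 e1 e2 e3.
have f0 : x0*y0 - x1*y1 - x2*y2 - x3*y3 = 0.
  apply: t; transitivity ((x0*y0 - x1*y1 - x2*y2 - x3*y3) - (-1) * (y0*x0 - y1*x1 - y2*x2 - y3*x3)); first ring.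
  by rewrite -e0 subrr.
have f1 : x0*y1 + x1*y0 = 0.
  apply: t; transitivity ((x0*y1 + x1*y0 + x2*y3 - x3*y2) - (-1) * (y0*x1 + y1*x0 + y2*x3 - y3*x2)); first ring.
  by rewrite -e1 subrr.
have f2 : x0*y2 + x2*y0 = 0.
  apply: t; transitivity ((x0*y2 - x1*y3 + x2*y0 + x3*y1) - (-1) * (y0*x2 - y1*x3 + y2*x0 + y3*x1)); first ring.
  by rewrite -e2 subrr.
have f3 : x0*y3 + x3*y0 = 0.
  apply: t; transitivity ((x0*y3 + x1*y2 - x2*y1 + x3*y0) - (-1) * (y0*x3 + y1*x2 - y2*x1 + y3*x0)); first ring.
  by rewrite -e3 subrr.
have : y0 * (x0^+2 + x1^+2 + x2^+2 + x3^+2) = 0.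
  transitivity (x0 * (x0*y0 - x1*y1 - x2*y2 - x3*y3) + x1 * (x0*y1 + x1*y0)
     + x2 * (x0*y2 + x2*y0) + x3 * (x0*y3 + x3*y0)); first ring.
  by rewrite f0 f1 f2 f3; ring.
move/eqP; rewrite mulf_eq0 (negbTE hy0) /= => /eqP hx.
by move: hN; rewrite /N hx mul0r eqxx.
Qed.

Definition par (x y : quat) : Prop :=
  [/\ q1 x * q2 y = q2 x * q1 y, q1 x * q3 y = q3 x * q1 y & q2 x * q3 y = q3 x * q2 y].

Lemma psi_pK (K : fieldType) (c d : K) x :
  psi_mx c d x = pK c d (q0 x)%:~R (q1 x)%:~R (q2 x)%:~R (q3 x)%:~R.
Proof. by []. Qed.

Lemma intr_eqK (K : fieldType) (u v : int) :
  [pchar K] =i pred0 -> u%:~R = v%:~R :> K -> u = v.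
Proof.
move=> h e; apply/eqP; rewrite -subr_eq0; apply/eqP; apply: (intr0_char0 h).
by rewrite intrB e subrr.
Qed.

Lemma key (K : fieldType) (c d : K) (a b : quat) :
  [pchar K] =i pred0 -> c ^+ 2 + d ^+ 2 + 1 = 0 ->
  q0 b != 0 -> qnorm2 a != 0 -> qnorm2 b != 0 ->
  pgl_eq (psi_mx c d a *m psi_mx c d b) (psi_mx c d b *m psi_mx c d a) ->
  par a b.
Proof.
move=> hc hS hb0 hna hnb [k _ E].
have h2 := two_neq0 hc.
rewrite !psi_pK !pK_mul // in E.
have [e0 e1 e2 e3] := pK_inj hS h2 E.
have hy0 : (q0 b)%:~R != 0 :> K.
  by apply/eqP => /(intr0_char0 hc) /eqP; rewrite (negbTE hb0).
have hN : ((q0 a)%:~R ^+ 2 + (q1 a)%:~R ^+ 2 + (q2 a)%:~R ^+ 2 + (q3 a)%:~R ^+ 2) *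
     ((q0 b)%:~R ^+ 2 + (q1 b)%:~R ^+ 2 + (q2 b)%:~R ^+ 2 + (q3 b)%:~R ^+ 2) != 0 :> K.
  have -> : ((q0 a)%:~R ^+ 2 + (q1 a)%:~R ^+ 2 + (q2 a)%:~R ^+ 2 + (q3 a)%:~R ^+ 2) *
     ((q0 b)%:~R ^+ 2 + (q1 b)%:~R ^+ 2 + (q2 b)%:~R ^+ 2 + (q3 b)%:~R ^+ 2) =
     (qnorm2 a * qnorm2 b)%:~R :> K.
    by rewrite /qnorm2 !expr2 intrM !intrD !intrM.
  apply/eqP => /(intr0_char0 hc) /eqP; rewrite mulf_eq0 (negbTE hna) (negbTE hnb).
  done.
have [f1 f2 f3] := keyK h2 hy0 hN e0 e1 e2 e3.
split; apply: (intr_eqK hc); by rewrite !intrM.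
Qed.

Lemma back (K : fieldType) (c d : K) (a b : quat) :
  c ^+ 2 + d ^+ 2 + 1 = 0 -> par a b ->
  pgl_eq (psi_mx c d a *m psi_mx c d b) (psi_mx c d b *m psi_mx c d a).
Proof.
move=> hS [h1 h2 h3]; exists 1; first exact: oner_neq0.
rewrite scale1r !psi_pK !pK_mul //.
have g1 : (q1 a)%:~R * (q2 b)%:~R = (q2 a)%:~R * (q1 b)%:~R :> K by rewrite -!intrM h1.
have g2 : (q1 a)%:~R * (q3 b)%:~R = (q3 a)%:~R * (q1 b)%:~R :> K by rewrite -!intrM h2.
have g3 : (q2 a)%:~R * (q3 b)%:~R = (q3 a)%:~R * (q2 b)%:~R :> K by rewrite -!intrM h3.
move: g1 g2 g3.
set x0 : K := (q0 a)%:~R; set x1 : K := (q1 a)%:~R; set x2 : K := (q2 a)%:~R; set x3 : K := (q3 a)%:~R.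
set y0 : K := (q0 b)%:~R; set y1 : K := (q1 b)%:~R; set y2 : K := (q2 b)%:~R; set y3 : K := (q3 b)%:~R.
move=> g1 g2 g3.
congr pK.
- ring.
- transitivity (y0*x1 + y1*x0 + y2*x3 - y3*x2 + 2 * (x2*y3 - x3*y2)); first ring.
  by rewrite g3 subrr mulr0 addr0.
- transitivity (y0*x2 - y1*x3 + y2*x0 + y3*x1 - 2 * (x1*y3 - x3*y1)); first ring.
  by rewrite g2 subrr mulr0 subr0.
- transitivity (y0*x3 + y1*x2 - y2*x1 + y3*x0 + 2 * (x1*y2 - x2*y1)); first ring.
  by rewrite g1 subrr mulr0 addr0.
Qed.

Lemma one (K : fieldType) (c d : K) (x : quat) :
  [pchar K] =i pred0 -> q1 x = 0 -> q2 x = 0 -> q3 x = 0 -> q0 x != 0 ->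
  pgl_eq (psi_mx c d x) 1%:M.
Proof.
move=> hc e1 e2 e3 h0; exists (q0 x)%:~R.
  by apply/eqP => /(intr0_char0 hc) /eqP; rewrite (negbTE h0).
rewrite psi_pK e1 e2 e3 mx2_1 mx2_scale /pK; congr mx2; rewrite /=; ring.
Qed.

Lemma tri (ak ai aj bk bi bj ci cj : int) :
  ak * bi = ai * bk -> ak * bj = aj * bk -> bi * cj = bj * ci -> bk != 0 ->
  ai * cj = aj * ci.
Proof.
move=> e1 e2 e3 hb; apply/eqP; rewrite -subr_eq0.
have : bk * (ai * cj - aj * ci) = 0.
  transitivity (- (ak * bi - ai * bk) * cj + (ak * bj - aj * bk) * ci + ak * (bi * cj - bj * ci)); first ring.
  by rewrite e1 e2 e3 !subrr; ring.
by move/eqP; rewrite mulf_eq0 (negbTE hb).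
Qed.

Ltac cc := first [done | by rewrite mulrC | by rewrite [LHS]mulrC | by rewrite [RHS]mulrC | by rewrite mulrC eq_sym | by rewrite eq_sym].
Lemma par_trans (a b c : quat) :
  par a b -> par b c -> ~ (q1 b = 0 /\ q2 b = 0 /\ q3 b = 0) -> par a c.
Proof.
move=> [h1 h2 h3] [g1 g2 g3] hb.
case: (eqVneq (q1 b) 0) => b1; last first.
  split.
  - apply: (@tri (q1 a) (q1 a) (q2 a) (q1 b) (q1 b) (q2 b)); cc.
  - apply: (@tri (q1 a) (q1 a) (q3 a) (q1 b) (q1 b) (q3 b)); cc.
  - apply: (@tri (q1 a) (q2 a) (q3 a) (q1 b) (q2 b) (q3 b)); cc.
case: (eqVneq (q2 b) 0) => b2; last first.
  split.
  - apply: (@tri (q2 a) (q1 a) (q2 a) (q2 b) (q1 b) (q2 b)); cc.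
  - apply: (@tri (q2 a) (q1 a) (q3 a) (q2 b) (q1 b) (q3 b)); cc.
  - apply: (@tri (q2 a) (q2 a) (q3 a) (q2 b) (q2 b) (q3 b)); cc.
case: (eqVneq (q3 b) 0) => b3; last first.
  split.
  - apply: (@tri (q3 a) (q1 a) (q2 a) (q3 b) (q1 b) (q2 b)); cc.
  - apply: (@tri (q3 a) (q1 a) (q3 a) (q3 b) (q1 b) (q3 b)); cc.
  - apply: (@tri (q3 a) (q2 a) (q3 a) (q3 b) (q2 b) (q3 b)); cc.
by exfalso; apply: hb.
Qed.

Lemma gamma_facts p l x : prime p -> prime l -> odd p -> odd l ->
  in_Gamma_tilde p l x -> q0 x != 0 /\ qnorm2 x != 0.
Proof.
move=> pp pl op ol [[r [s E]] [H1 H3]].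
have on : odd (p ^ r * l ^ s)%N by rewrite oddM !oddX op ol !orbT.
have hz : q0 x != 0.
  have : zodd (q0 x).
    move: (ltn_pmod (p ^ r * l ^ s)%N (isT : 0 < 4)%N).
    have := odd_mod (p ^ r * l ^ s)%N (erefl : odd 4 = false); rewrite on.
    rewrite E modz_nat in H1 H3.
    case: ((p ^ r * l ^ s) %% 4)%N H1 H3 => [|[|[|[|]]]] //= H1 H3 _ _.
      by case: (H1 erefl).
    by case: (H3 erefl).
  by apply: contraTneq => ->.
split=> //.
rewrite E; apply/eqP => -[]; apply/eqP; rewrite -lt0n muln_gt0 !expn_gt0.
by rewrite !prime_gt0.
Qed.

Theorem proposition2p2 (p l : nat) (Kp Kl : fieldType)
    (cp dp : Kp) (cl dl : Kl) :
  prime p -> prime l -> odd p -> odd l -> p != l ->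
  [pchar Kp] =i pred0 -> [pchar Kl] =i pred0 ->
  cp ^+ 2 + dp ^+ 2 + 1 = 0 -> cl ^+ 2 + dl ^+ 2 + 1 = 0 ->
  forall a b c : quat,
    in_Gamma_tilde p l a -> in_Gamma_tilde p l b -> in_Gamma_tilde p l c ->
    ~ psi_is_one cp dp cl dl a -> ~ psi_is_one cp dp cl dl b ->
    ~ psi_is_one cp dp cl dl c ->
    psi_commute cp dp cl dl a b -> psi_commute cp dp cl dl b c ->
    psi_commute cp dp cl dl a c.
Proof.
move=> pp pl op ol _ hcp hcl hSp hSl a b c Ga Gb Gc na nb nc [ab _] [bc _].
have [a0 an] := gamma_facts pp pl op ol Ga.
have [b0 bn] := gamma_facts pp pl op ol Gb.
have [c0 cn] := gamma_facts pp pl op ol Gc.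
have pab := key hcp hSp b0 an bn ab.
have pbc := key hcp hSp c0 bn cn bc.
have hb : ~ (q1 b = 0 /\ q2 b = 0 /\ q3 b = 0).
  by move=> [e1 [e2 e3]]; apply: nb; split; apply: one.
have pac := par_trans pab pbc hb.
by split; apply: back.
Qed.
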